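(* Let $\widehat{G}$ be a signed bigraph whose underlying bigraph is non-separable, with bipartition $(X,Y)$ and no isolated vertices, and let $x_1,\dots,x_\alpha,y_1,\dots,y_\beta$ be a canonical ordering of $\widehat{G}$. Suppose there are distinct $x_i,x_j,x_k\in X$ and distinct $y_\ell,y_q,y_r\in Y$ with $x_i,x_j\in N(y_1)$ such that, in the subgraph induced by these six vertices, the edges are exactly $x_iy_\ell,x_iy_q,x_iy_r,x_jy_\ell,x_jy_q,x_jy_r,x_ky_r$ (so $x_ky_\ell,x_ky_q$ are non-edges), where $x_iy_\ell$, $x_iy_q$ and $x_jy_r$ are negative (the others of any sign). If no edge of $\widehat{G}$ is signed simplicial, then $\widehat{G}$ contains a graph in $F_3\cup F_4\cup F_5\cup F_6$ as an induced subgraph, where: $F_3$: complete bigraph with parts $\{a_1,a_2\}$, $\{b_1,\dots,b_4\}$, $a_1b_1,a_1b_2,a_2b_3,a_2b_4$ negative, other four edges free; $F_4$: complete bigraph with parts $\{a_1,a_2,a_3\}$, $\{b_1,b_2,b_3\}$, $a_1b_1,a_2b_2,a_3b_3$ negative, other six edges free; $F_5$: bigraph with parts $\{a_1,a_2,a_3\}$, $\{b_1,b_2,b_3\}$ having all nine possible edges except $a_1b_3$, with $a_2b_1,a_3b_2$ negative and the other six edges free; $F_6$: bigraph with parts $\{a_1,\dots,a_4\}$, $\{b_1,\dots,b_4\}$ in which $a_1,a_2$ are adjacent exactly to $b_1,b_2$ and $a_3,a_4$ to all of $b_1,\dots,b_4$, with $a_1b_1,a_2b_1,a_3b_2,a_4b_3,a_4b_4$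 negative and the other seven edges free.
   Context: A signed graph is a finite simple graph each of whose edges is assigned a sign, positive or negative. A signed bigraph is a signed graph whose underlying graph is bipartite. A bigraph is non-separable if it contains no induced $2K_2$. An induced subgraph is obtained by deleting vertices only; $\widehat G$ contains $H$ as an induced subgraph if some induced subgraph is isomorphic to $H$ via a sign-preserving isomorphism. In a bigraph with bipartition $(X,Y)$, a subgraph $H$ is a biclique if every vertex of $V(H)\cap X$ is adjacent to every vertex of $V(H)\cap Y$. For an edge $uv$, $N(uv)=(N(u)\cup N(v))\setminus\{u,v\}$; $uv$ is signed simplicial if $N(uv)$ induces a biclique all of whose edges are positive. A canonical ordering of a non-separable bigraph with $X=\{x_1,\dots,x_\alpha\}$, $Y=\{y_1,\dots,y_\beta\}$ is an ordering with $N(x_1)\supseteq\cdots\supseteq N(x_\alpha)$ and $N(y_1)\subseteq\cdots\subseteq N(y_\beta)$. A family described by a graph with some edges declared negative and the rest declared free is the set of all signed graphs obtained by giving each free edge an arbitrary sign. *)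

(* Defs.v *)
From mathcomp Require Import all_boot.
Set Implicit Arguments. Unset Strict Implicit. Unset Printing Implicit Defensive.

(* A signed bigraph with bipartition (X,Y): an adjacency relation
   adj : X -> Y -> bool (edges go between X and Y only, so the graph is
   simple and bipartite) and a sign neg : X -> Y -> bool
   (neg x y = true means the edge xy is negative; only meaningful on edges). *)

(* non-separable: no induced 2K2 *)
Definition no_induced_2K2 (X Y : finType) (adj : X -> Y -> bool) : Prop :=
  ~ (exists x x' y y', [/\ adj x y, adj x' y', ~~ adj x y' & ~~ adj x' y]).

Definition no_isolated (X Y : finType) (adj : X -> Y -> bool) : Prop :=
  (forall x, exists y, adj x y) /\ (forall y, exists x, adj x y).

Definition nbY (X Y : finType) (adj : X -> Y -> bool) (x : X) : {set Y} :=
  [set y | adj x y].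
Definition nbX (X Y : finType) (adj : X -> Y -> bool) (y : Y) : {set X} :=
  [set x | adj x y].

(* canonical ordering x_1..x_a, y_1..y_b (0-based indices) *)
Definition canonical_ordering (X Y : finType) (adj : X -> Y -> bool)
  (a b : nat) (ox : 'I_a -> X) (oy : 'I_b -> Y) : Prop :=
  [/\ bijective ox, bijective oy,
      (forall i j : 'I_a, i <= j -> nbY adj (ox j) \subset nbY adj (ox i))
    & (forall i j : 'I_b, i <= j -> nbX adj (oy i) \subset nbX adj (oy j))].

(* For the edge xy: N(xy) = (N(x) u N(y)) \ {x,y}; its X-part is N(y)\{x}
   and its Y-part is N(x)\{y}.  xy is signed simplicial if N(xy) induces
   a biclique all of whose edges are positive. *)
Definition signed_simplicial (X Y : finType) (adj neg : X -> Y -> bool)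
  (x : X) (y : Y) : bool :=
  adj x y &&
  [forall x' in nbX adj y :\ x, forall y' in nbY adj x :\ y,
      adj x' y' && ~~ neg x' y'].

(* A family of signed bigraphs with parts {a_1..a_m}, {b_1..b_n}:
   E = edge set, Neg = edges declared negative (the other edges are free).
   A member of the family is given by a sign function sigma
   (sigma i j = true: edge a_i b_j negative) agreeing with Neg. *)
Definition in_family (m n : nat) (E Neg sigma : 'I_m -> 'I_n -> bool) : Prop :=
  forall i j, E i j -> Neg i j -> sigma i j.

(* The signed graph G contains the signed bigraph (E,sigma) as an induced
   subgraph (sign-preserving isomorphism); the isomorphism may send the
   part {a_i} to X or to Y. *)
Definition contains_induced (X Y : finType) (adj neg : X -> Y -> bool)
  (m n : nat) (E sigma : 'I_m -> 'I_n -> bool) : Prop :=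
  (exists (fa : 'I_m -> X) (fb : 'I_n -> Y),
     [/\ injective fa, injective fb &
         forall i j, adj (fa i) (fb j) = E i j /\
                     (E i j -> neg (fa i) (fb j) = sigma i j)])
  \/
  (exists (fa : 'I_m -> Y) (fb : 'I_n -> X),
     [/\ injective fa, injective fb &
         forall i j, adj (fb j) (fa i) = E i j /\
                     (E i j -> neg (fb j) (fa i) = sigma i j)]).

Definition contains_family (X Y : finType) (adj neg : X -> Y -> bool)
  (m n : nat) (E Neg : 'I_m -> 'I_n -> bool) : Prop :=
  exists sigma, in_family E Neg sigma /\ contains_induced adj neg E sigma.

(* indices are 0-based: a_1 is index 0, etc. *)
Definition F3E (i : 'I_2) (j : 'I_4) : bool := true.
Definition F3Neg (i : 'I_2) (j : 'I_4) : bool :=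
  ((i == 0 :> nat) && (j < 2)) || ((i == 1 :> nat) && (2 <= j)).

Definition F4E (i : 'I_3) (j : 'I_3) : bool := true.
Definition F4Neg (i : 'I_3) (j : 'I_3) : bool := (i == j :> nat).

Definition F5E (i : 'I_3) (j : 'I_3) : bool := ~~ ((i == 0 :> nat) && (j == 2 :> nat)).
Definition F5Neg (i : 'I_3) (j : 'I_3) : bool :=
  ((i == 1 :> nat) && (j == 0 :> nat)) || ((i == 2 :> nat) && (j == 1 :> nat)).

Definition F6E (i : 'I_4) (j : 'I_4) : bool := (2 <= i) || (j < 2).
Definition F6Neg (i : 'I_4) (j : 'I_4) : bool :=
  [|| (i == 0 :> nat) && (j == 0 :> nat), (i == 1 :> nat) && (j == 0 :> nat),
      (i == 2 :> nat) && (j == 1 :> nat) | (i == 3 :> nat) && (2 <= j)].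

(* Main.v *)
Require Import Defs.
From mathcomp Require Import all_boot.

Lemma mkX (X Y : finType) (adj neg : X -> Y -> bool) m n
  (E Neg : 'I_m -> 'I_n -> bool) (sa : seq X) (sb : seq Y) x0 y0 :
  size sa = m -> size sb = n -> uniq sa -> uniq sb ->
  (forall (i : 'I_m) (j : 'I_n), adj (nth x0 sa i) (nth y0 sb j) = E i j) ->
  (forall (i : 'I_m) (j : 'I_n), E i j -> Neg i j -> neg (nth x0 sa i) (nth y0 sb j)) ->
  contains_family adj neg E Neg.
Proof.
move=> Hsa Hsb Ua Ub HE HN.
exists (fun i j => neg (nth x0 sa i) (nth y0 sb j)); split.
  by move=> i j; exact: HN.
left; exists (fun i => nth x0 sa i), (fun j => nth y0 sb j); split.
- by move=> i j /eqP; rewrite nth_uniq ?Hsa ?ltn_ord // => /eqP; apply: val_inj.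
- by move=> i j /eqP; rewrite nth_uniq ?Hsb ?ltn_ord // => /eqP; apply: val_inj.
- by move=> i j; split; [exact: HE | ].
Qed.

Lemma mkY (X Y : finType) (adj neg : X -> Y -> bool) m n
  (E Neg : 'I_m -> 'I_n -> bool) (sa : seq Y) (sb : seq X) y0 x0 :
  size sa = m -> size sb = n -> uniq sa -> uniq sb ->
  (forall (i : 'I_m) (j : 'I_n), adj (nth x0 sb j) (nth y0 sa i) = E i j) ->
  (forall (i : 'I_m) (j : 'I_n), E i j -> Neg i j -> neg (nth x0 sb j) (nth y0 sa i)) ->
  contains_family adj neg E Neg.
Proof.
move=> Hsa Hsb Ua Ub HE HN.
exists (fun i j => neg (nth x0 sb j) (nth y0 sa i)); split.
  by move=> i j; exact: HN.
right; exists (fun i => nth y0 sa i), (fun j => nth x0 sb j); split.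
- by move=> i j /eqP; rewrite nth_uniq ?Hsa ?ltn_ord // => /eqP; apply: val_inj.
- by move=> i j /eqP; rewrite nth_uniq ?Hsb ?ltn_ord // => /eqP; apply: val_inj.
- by move=> i j; split; [exact: HE | ].
Qed.

Ltac allij := move=> [[|[|[|[|?]]]] ?] [[|[|[|[|?]]]] ?] //=.

Definition goalP (X Y : finType) (adj neg : X -> Y -> bool) :=
  [\/ contains_family adj neg F3E F3Neg,
      contains_family adj neg F4E F4Neg,
      contains_family adj neg F5E F5Neg |
      contains_family adj neg F6E F6Neg].
Arguments goalP {X Y}.


Lemma F5T (X Y : finType) (adj neg : X -> Y -> bool) xi xj xk yl yr y' :
  uniq [:: xi; xj; xk] -> uniq [:: yl; y'; yr] ->
  (forall y, adj xi y) -> (forall y, adj xj y) -> adj xk y' -> adj xk yr -> adj xk yl = false ->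
  neg xi y' -> neg xj yr -> goalP adj neg.
Proof.
move=> U1 U2 ui uj H1 H2 H3 N1 N2.
constructor 3; apply: (@mkY _ _ _ _ 3 3 _ _ [:: yl; y'; yr] [:: xi; xj; xk] yl xi) => //; allij;
 by rewrite ?ui ?uj ?H1 ?H2 ?H3 ?N1 ?N2.
Qed.

Lemma F3i (X Y : finType) (adj neg : X -> Y -> bool) xi xj yl yq yr y' :
  xi != xj -> uniq [:: yl; yq; yr; y'] ->
  (forall y, adj xi y) -> (forall y, adj xj y) ->
  neg xi yl -> neg xi yq -> neg xj yr -> neg xj y' -> goalP adj neg.
Proof.
move=> U1 U2 ui uj N1 N2 N3 N4.
constructor 1; apply: (@mkX _ _ _ _ 2 4 _ _ [:: xi; xj] [:: yl; yq; yr; y'] xi yl) => //;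
 first by rewrite /= inE U1.
all: by allij; rewrite ?ui ?uj ?N1 ?N2 ?N3 ?N4.
Qed.

Lemma F4i (X Y : finType) (adj neg : X -> Y -> bool) p q r u v w :
  uniq [:: p; q; r] -> uniq [:: u; v; w] ->
  adj p u -> adj p v -> adj p w -> adj q u -> adj q v -> adj q w ->
  adj r u -> adj r v -> adj r w ->
  neg p u -> neg q v -> neg r w -> goalP adj neg.
Proof.
move=> U1 U2 A1 A2 A3 A4 A5 A6 A7 A8 A9 N1 N2 N3.
constructor 2; apply: (@mkX _ _ _ _ 3 3 _ _ [:: p; q; r] [:: u; v; w] p u) => //;
 by allij; rewrite ?A1 ?A2 ?A3 ?A4 ?A5 ?A6 ?A7 ?A8 ?A9 ?N1 ?N2 ?N3.
Qed.

Lemma F5i (X Y : finType) (adj neg : X -> Y -> bool) t x' xj y' yr b3 :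
  uniq [:: t; x'; xj] -> uniq [:: y'; yr; b3] -> (forall y, adj xj y) ->
  adj t y' -> adj t yr -> adj t b3 = false -> adj x' y' -> adj x' yr -> adj x' b3 ->
  neg x' y' -> neg xj yr -> goalP adj neg.
Proof.
move=> U1 U2 uj A1 A2 A3 A4 A5 A6 N1 N2.
constructor 3; apply: (@mkX _ _ _ _ 3 3 _ _ [:: t; x'; xj] [:: y'; yr; b3] t y') => //;
 by allij; rewrite ?uj ?A1 ?A2 ?A3 ?A4 ?A5 ?A6 ?N1 ?N2.
Qed.

Lemma F6i (X Y : finType) (adj neg : X -> Y -> bool) x1 x2 xj xi y1 yr yl yq :
  uniq [:: x1; x2; xj; xi] -> uniq [:: y1; yr; yl; yq] ->
  (forall y, adj xi y) -> (forall y, adj xj y) ->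
  adj x1 y1 -> adj x1 yr -> adj x1 yl = false -> adj x1 yq = false ->
  adj x2 y1 -> adj x2 yr -> adj x2 yl = false -> adj x2 yq = false ->
  neg x1 y1 -> neg x2 y1 -> neg xj yr -> neg xi yl -> neg xi yq -> goalP adj neg.
Proof.
move=> U1 U2 ui uj A1 A2 A3 A4 A5 A6 A7 A8 N1 N2 N3 N4 N5.
constructor 4; apply: (@mkX _ _ _ _ 4 4 _ _ [:: x1; x2; xj; xi] [:: y1; yr; yl; yq] x1 y1) => //;
 by allij; rewrite ?ui ?uj ?A1 ?A2 ?A3 ?A4 ?A5 ?A6 ?A7 ?A8 ?N1 ?N2 ?N3 ?N4 ?N5.
Qed.

Ltac uq := rewrite /= ?inE ?negb_or ?andbT; repeat (apply/andP; split); try (by []); try (by rewrite eq_sym).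

Lemma step (X Y : finType) (adj neg : X -> Y -> bool) xi xj yl yq yr t :
  xi != xj -> uniq [:: yl; yq; yr] -> (forall y, adj xi y) -> (forall y, adj xj y) ->
  neg xi yl -> neg xi yq -> neg xj yr ->
  (forall x y, ~~ signed_simplicial adj neg x y) ->
  adj t yr -> (forall x y, adj x yr -> adj t y -> adj x y) -> ~~ adj t yl -> ~~ adj t yq ->
  goalP adj neg \/ exists x' y', [/\ x' != t, adj x' yr,
     (forall x y, adj x yr -> adj x' y -> adj x y), ~~ adj x' yl &
     [/\ ~~ adj x' yq, adj t y', adj x' y', y' != yr & neg x' y']].
Proof.
move=> ij Uy ui uj Nil Niq Njr Hns Htr Hmin Htl Htq.
move: Uy; rewrite /= !inE !negb_or andbT => /andP [/andP [lq lr] qr].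
have := Hns t yr; rewrite /signed_simplicial Htr /=.
case/forallPn => x'; rewrite negb_imply => /andP [Hx' /forallPn [y']].
rewrite negb_imply => /andP [Hy' H].
move: Hx' Hy'; rewrite !inE => /andP [Hx't Hx'r] /andP [Hy'r Hty'].
have Hx'y' : adj x' y' := Hmin _ _ Hx'r Hty'.
move: H; rewrite Hx'y' /= negbK => Hn.
have ti : t != xi by apply: contraNneq Htl => ->.
have tj : t != xj by apply: contraNneq Htl => ->.
have y'l : y' != yl by apply: contraNneq Htl => <-.
have y'q : y' != yq by apply: contraNneq Htq => <-.
case: (eqVneq x' xi) => [ex | nxi].
  left; subst x'; apply: (@F5T _ _ adj neg xi xj t yl yr y') => //; first by uq.
    by uq.
  exact: negbTE.
case: (eqVneq x' xj) => [ex | nxj].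
  left; subst x'; apply: (@F3i _ _ adj neg xi xj yl yq yr y') => //; by uq.
case: (boolP [exists b3, adj x' b3 && ~~ adj t b3]) => [/existsP [b3 /andP [A B]] | /existsPn Hno].
  have y'b : y' != b3 by apply: contraNneq B => <-.
  have rb : yr != b3 by apply: contraNneq B => <-.
  left; apply: (@F5i _ _ adj neg t x' xj y' yr b3) => //; try by uq.
  exact: negbTE.
right.
have sub : forall y, adj x' y -> adj t y by move=> y Hy; move: (Hno y); rewrite Hy /= negbK.
exists x', y'; split => //.
- by move=> x y Hx Hy; apply: Hmin Hx (sub _ Hy).
- by apply: contraNN Htl => /sub.
- split => //; by apply: contraNN Htq => /sub.
Qed.

Theorem lemma3p4 (X Y : finType) (adj neg : X -> Y -> bool)
  (a b : nat) (ox : 'I_a -> X) (oy : 'I_b -> Y)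
  (xi xj xk : X) (yl yq yr : Y) :
  no_induced_2K2 adj -> no_isolated adj -> canonical_ordering adj ox oy ->
  uniq [:: xi; xj; xk] -> uniq [:: yl; yq; yr] ->
  (forall i0 : 'I_b, val i0 = 0 -> adj xi (oy i0) && adj xj (oy i0)) ->
  adj xi yl -> adj xi yq -> adj xi yr ->
  adj xj yl -> adj xj yq -> adj xj yr ->
  adj xk yr -> ~~ adj xk yl -> ~~ adj xk yq ->
  neg xi yl -> neg xi yq -> neg xj yr ->
  (forall (x : X) (y : Y), ~~ signed_simplicial adj neg x y) ->
  [\/ contains_family adj neg F3E F3Neg,
      contains_family adj neg F4E F4Neg,
      contains_family adj neg F5E F5Neg |
      contains_family adj neg F6E F6Neg].
Proof.
move=> H2K2 _ Hcan Ux Uy Hy1 Hil Hiq Hir Hjl Hjq Hjr Hkr Hkl Hkq Nil Niq Njr Hns.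
change (goalP adj neg).
case: Hcan => _ [g oyK gK] _ Hsub.
have Hb : 0 < b by case: (g yl) => k Hk; exact: leq_ltn_trans (leq0n k) Hk.
have /andP [Hi0 Hj0] := Hy1 (Ordinal Hb) erefl.
have ui : forall y, adj xi y.
  move=> y; have := Hsub (Ordinal Hb) (g y) (leq0n _); rewrite gK => /subsetP /(_ xi).
  by rewrite /nbX !inE; apply.
have uj : forall y, adj xj y.
  move=> y; have := Hsub (Ordinal Hb) (g y) (leq0n _); rewrite gK => /subsetP /(_ xj).
  by rewrite /nbX !inE; apply.
have ij : xi != xj by move: Ux; rewrite /= !inE negb_or => /andP [/andP []].
have Uy' := Uy.
move: Uy; rewrite /= !inE !negb_or andbT => /andP [/andP [lq lr] qr].
have [t Htr Hmin] : exists2 t, adj t yr & forall x y, adj x yr -> adj t y -> adj x y.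
  case: (@arg_minnP X xk (fun t => adj t yr) (fun t => #|nbY adj t|) Hkr) => t Ht Hle.
  exists t => // x y Hx Hty; apply/negPn/negP => Hxy.
  case: (boolP [exists y2, adj x y2 && ~~ adj t y2]) => [/existsP [y2 /andP [A B]] | /existsPn Hno].
    by apply: H2K2; exists t, x, y, y2; split.
  have : nbY adj x \proper nbY adj t.
    rewrite properE; apply/andP; split.
      apply/subsetP => z; rewrite /nbY !inE => Hz; by move: (Hno z); rewrite Hz /= negbK.
    by apply/subsetPn; exists y; rewrite /nbY !inE.
  by move/proper_card; rewrite ltnNge (Hle x Hx).
have Htl : ~~ adj t yl by apply: contraNN Hkl => H; exact: Hmin _ _ Hkr H.
have Htq : ~~ adj t yq by apply: contraNN Hkq => H; exact: Hmin _ _ Hkr H.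
case: (@step _ _ _ _ _ _ _ _ _ _ ij Uy' ui uj Nil Niq Njr Hns Htr Hmin Htl Htq) => // -[x1 [y1 [x1t x1r Hmin1 x1l [x1q ty1 x1y1 y1r N1]]]].
case: (@step _ _ _ _ _ _ _ _ _ _ ij Uy' ui uj Nil Niq Njr Hns x1r Hmin1 x1l x1q) => // -[x2 [y2 [x21 x2r Hmin2 x2l [x2q x1y2 x2y2 y2r N2]]]].
have x2y1 : adj x2 y1 := Hmin _ _ x2r ty1.
have x1i : x1 != xi by apply: contraNneq x1l => ->.
have x1j : x1 != xj by apply: contraNneq x1l => ->.
have x2i : x2 != xi by apply: contraNneq x2l => ->.
have x2j : x2 != xj by apply: contraNneq x2l => ->.
have y1l : y1 != yl by apply: contraNneq x1l => <-.
have y1q : y1 != yq by apply: contraNneq x1q => <-.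
have y2l : y2 != yl by apply: contraNneq x2l => <-.
have y2q : y2 != yq by apply: contraNneq x2q => <-.
case: (eqVneq y1 y2) => [e | y12]; last first.
  by apply: (@F4i _ _ adj neg x1 x2 xj y1 y2 yr) => //; uq.
subst y2.
  apply: (@F6i _ _ adj neg x1 x2 xj xi y1 yr yl yq) => //; try by uq.
  all: try exact: negbTE.
Qed.
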